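(* Let $P$ be the program with a single integer-valued program variable $n$ and no random variables: $n:=1$; while $n\ge1$ do if prob($\tfrac12$) then $n:=n+1$ else $n:=n-1$; $n:=n-1$ fi od. Then $P$ terminates almost surely and its expected termination time $\mathsf{ET}(P)$ (the expected value of $T$ in its stochastic game structure $\mathcal{G}_P$; there are no schedulers since there is no nondeterminism) is an irrational number.
   Context: The stochastic game structure $\mathcal{G}_P$ is built inductively: an assignment $x:=e$ gives two deterministic locations $\ell^{in},\ell^{out}$ and one transition $\ell^{in}\to\ell^{out}$ performing the update; a sequence $Q_1;Q_2$ identifies $\ell^{out}_{Q_1}$ with $\ell^{in}_{Q_2}$; a loop ''while $\phi$ do $Q$ od'' adds a deterministic location $\ell^{in}$ identified with $\ell^{out}_Q$, a new location $\ell^{out}$, and identity transitions $\ell^{in}\to\ell^{in}_Q$ with guard $\phi$ and $\ell^{in}\to\ell^{out}$ with guard $\neg\phi$; ''if prob($p$) then $Q_1$ else $Q_2$ fi'' adds a probabilistic location $\ell^{in}$ with identity transitions to $\ell^{in}_{Q_1}$ (probability $p$) and $\ell^{in}_{Q_2}$ (probability $1-p$), and identifies $\ell^{out}_{Q_1},\ell^{out}_{Q_2}$ with the statement's $\ell^{out}$. The program's final $\ell^{out}$ is the terminal location $\ell_{out}$ (with a self-loop). A run $c_1c_2\cdots$ starts at $c_1$ = (initial location, initial valuation) and each step follows one transition; $T=\min\{n:\text{the location of }c_n\text{ is }\ell_{out}\}$. *)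

(* Defs.v *)
From Stdlib Require Import Reals ZArith List Bool.
Import ListNotations.
Open Scope R_scope.

Definition valuation := Z.

(* A transition: source location, guard, update, target location, and the
   probability with which it is taken (1 for transitions out of
   deterministic locations, p / 1-p out of probabilistic locations). *)
Record transition := mkTr {
  tr_src : nat;
  tr_guard : valuation -> bool;
  tr_upd : valuation -> valuation;
  tr_tgt : nat;
  tr_prob : R }.

Record sgs := mkSGS {
  locs_init : nat;
  loc_out : nat;
  trans : list transition }.

Definition config := (nat * valuation)%type.

Definition succ (G : sgs) (c : config) : list (R * config) :=
  map (fun t => (tr_prob t, (tr_tgt t, tr_upd t (snd c))))
      (filter (fun t => andb (Nat.eqb (tr_src t) (fst c)) (tr_guard t (snd c)))
              (trans G)).

(* hitT G m c = probability (under the run measure started with c_1 = c)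
   that T = m, where T = min {m : location of c_m is loc_out}  (m >= 1). *)
Fixpoint hitT (G : sgs) (m : nat) (c : config) : R :=
  match m with
  | O => 0
  | S m' =>
      if Nat.eqb (fst c) (loc_out G) then (match m' with O => 1 | _ => 0 end)
      else match m' with
           | O => 0
           | _ => fold_right Rplus 0
                    (map (fun pc => fst pc * hitT G m' (snd pc)) (succ G c))
           end
  end.

Definition terminates_as (G : sgs) (c1 : config) : Prop :=
  infinite_sum (fun k => hitT G (S k) c1) 1.

Definition expected_time_is (G : sgs) (c1 : config) (e : R) : Prop :=
  infinite_sum (fun k => INR (S k) * hitT G (S k) c1) e.

Definition irrational (x : R) : Prop :=
  forall p q : Z, q <> 0%Z -> x <> IZR p / IZR q.

(* ---------- The game structure G_P of the program
   n:=1; while n>=1 do if prob(1/2) then n:=n+1 else n:=n-1; n:=n-1 fi od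
   built by the inductive construction:
     0 --(n:=1)--> 1                         (assignment)
     1 --[n>=1]--> 2 ,  1 --[n<1]--> 6        (while; 1 = l_in of loop)
     2 --1/2--> 3 ,  2 --1/2--> 4             (probabilistic if)
     3 --(n:=n+1)--> 1                        (then branch, out = loop in)
     4 --(n:=n-1)--> 5 --(n:=n-1)--> 1        (else branch, sequence)
     6 --> 6                                  (terminal self-loop)   *)
Definition always (_ : valuation) := true.

Definition GP : sgs := mkSGS 0 6
  [ mkTr 0 always (fun _ => 1%Z) 1 1;
    mkTr 1 (fun n => Z.leb 1 n) (fun n => n) 2 1;
    mkTr 1 (fun n => negb (Z.leb 1 n)) (fun n => n) 6 1;
    mkTr 2 always (fun n => n) 3 (1/2);
    mkTr 2 always (fun n => n) 4 (1 - 1/2);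
    mkTr 3 always (fun n => (n + 1)%Z) 1 1;
    mkTr 4 always (fun n => (n - 1)%Z) 5 1;
    mkTr 5 always (fun n => (n - 1)%Z) 1 1;
    mkTr 6 always (fun n => n) 6 1 ].

(* Main.v *)
Require Import Defs.
From Stdlib Require Import Reals ZArith.
Open Scope R_scope.
From Stdlib Require Import Lra Lia List.
Import ListNotations.

Definition sumsucc (f : config -> R) (c : config) : R :=
  fold_right Rplus 0 (map (fun pc => fst pc * f (snd pc)) (succ GP c)).

Definition ss (f : config -> R) (c : config) : R :=
  let n := snd c in
  match fst c with
  | 0%nat => f (1%nat, 1%Z)
  | 1%nat => if Z.leb 1 n then f (2%nat, n) else f (6%nat, n)
  | 2%nat => 1/2 * f (3%nat, n) + (1 - 1/2) * f (4%nat, n)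
  | 3%nat => f (1%nat, (n+1)%Z)
  | 4%nat => f (5%nat, (n-1)%Z)
  | 5%nat => f (1%nat, (n-1)%Z)
  | 6%nat => f (6%nat, n)
  | _ => 0
  end.

Lemma sumsucc_ss f c : sumsucc f c = ss f c.
Proof.
  destruct c as [l n]. unfold sumsucc, ss, succ.
  destruct l as [|[|[|[|[|[|[|l]]]]]]]; simpl; try (destruct (Z.leb 1 n)); simpl; try ring; rewrite ?Rmult_1_l, ?Rplus_0_r; reflexivity.
Qed.

Lemma hitT_step m c : fst c <> 6%nat ->
  hitT GP (S (S m)) c = ss (hitT GP (S m)) c.
Proof.
  intros H. rewrite <- sumsucc_ss. simpl.
  destruct (Nat.eqb (fst c) 6) eqn:E; [apply Nat.eqb_eq in E; contradiction|].
  reflexivity.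
Qed.

Lemma hitT_1 c : fst c <> 6%nat -> hitT GP 1 c = 0.
Proof.
  intros H. simpl. destruct (Nat.eqb (fst c) 6) eqn:E; [apply Nat.eqb_eq in E; contradiction|].
  reflexivity.
Qed.

Lemma hitT_term m c : fst c = 6%nat -> hitT GP (S m) c = match m with O => 1 | _ => 0 end.
Proof.
  intros H. simpl. rewrite H. reflexivity.
Qed.

Lemma ss_ext f g c : (forall c', f c' = g c') -> ss f c = ss g c.
Proof. intros H. destruct c as [l n]. unfold ss; simpl.
  destruct l as [|[|[|[|[|[|[|l]]]]]]]; rewrite ?H; auto. Qed.

Lemma ss_lin a b f g c : ss (fun c' => a * f c' + b * g c') c = a * ss f c + b * ss g c.
Proof. destruct c as [l n]. unfold ss; simpl.
  destruct l as [|[|[|[|[|[|[|l]]]]]]]; try destruct (Z.leb 1 n); ring. Qed.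

Definition A M c := sum_f_R0 (fun k => hitT GP (S k) c) M.
Definition B M c := sum_f_R0 (fun k => INR (S k) * hitT GP (S k) c) M.

Lemma A_rec M c : fst c <> 6%nat -> A (S M) c = ss (A M) c.
Proof.
  intros H. induction M.
  - change (A 1 c) with (hitT GP 1 c + hitT GP 2 c). rewrite hitT_1, hitT_step by auto. rewrite Rplus_0_l. apply ss_ext; reflexivity.
  - unfold A in *. change (sum_f_R0 (fun k => hitT GP (S k) c) (S (S M)))
      with (sum_f_R0 (fun k => hitT GP (S k) c) (S M) + hitT GP (S (S (S M))) c).
    rewrite IHM, hitT_step by auto.
    transitivity (ss (fun c' => 1 * sum_f_R0 (fun k => hitT GP (S k) c') M + 1 * hitT GP (S (S M)) c') c).
    + rewrite ss_lin. ring.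
    + apply ss_ext. intros. simpl. ring.
Qed.

Lemma B_rec M c : fst c <> 6%nat -> B (S M) c = ss (fun c' => B M c' + A M c') c.
Proof.
  intros H. induction M.
  - change (B 1 c) with (INR 1 * hitT GP 1 c + INR 2 * hitT GP 2 c). rewrite hitT_1, hitT_step by auto.
    transitivity (ss (fun c' => 2 * hitT GP 1 c' + 0 * hitT GP 1 c') c).
    + rewrite ss_lin. simpl INR; ring.
    + apply ss_ext. intros. change (B 0 c') with (INR 1 * hitT GP 1 c'). change (A 0 c') with (hitT GP 1 c'). simpl INR. ring.
  - change (B (S (S M)) c) with (B (S M) c + INR (S (S (S M))) * hitT GP (S (S (S M))) c).
    rewrite IHM, hitT_step by auto.
    transitivity (ss (fun c' => 1 * (B M c' + A M c') + INR (S (S (S M))) * hitT GP (S (S M)) c') c).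
    + rewrite ss_lin. ring.
    + apply ss_ext. intros. unfold B, A. change (sum_f_R0 (fun k => INR (S k) * hitT GP (S k) c') (S M))
       with (sum_f_R0 (fun k => INR (S k) * hitT GP (S k) c') M + INR (S (S M)) * hitT GP (S (S M)) c').
      change (sum_f_R0 (fun k => hitT GP (S k) c') (S M))
       with (sum_f_R0 (fun k => hitT GP (S k) c') M + hitT GP (S (S M)) c').
      rewrite !S_INR. ring.
Qed.

Lemma A_term M c : fst c = 6%nat -> A M c = 1.
Proof. intros H. induction M.
  - unfold A; simpl. rewrite H; reflexivity.
  - change (A (S M) c) with (A M c + hitT GP (S (S M)) c).
    rewrite IHM, hitT_term by auto. ring. Qed.

Lemma B_term M c : fst c = 6%nat -> B M c = 1.
Proof. intros H. induction M.
  - unfold B; simpl. rewrite H. simpl. ring.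
  - change (B (S M) c) with (B M c + INR (S (S M)) * hitT GP (S (S M)) c).
    rewrite IHM, hitT_term by auto. ring. Qed.

Lemma ss_nonneg f c : (forall c', 0 <= f c') -> 0 <= ss f c.
Proof. intros H. destruct c as [l n]. unfold ss; simpl.
  pose proof (H (3%nat, n)); pose proof (H (4%nat, n)).
  destruct l as [|[|[|[|[|[|[|l]]]]]]]; try destruct (Z.leb 1 n); try apply H; lra. Qed.

Lemma ss_mono f g c : (forall c', f c' <= g c') -> ss f c <= ss g c.
Proof. intros H. destruct c as [l n]. unfold ss; simpl.
  pose proof (H (3%nat, n)); pose proof (H (4%nat, n)).
  destruct l as [|[|[|[|[|[|[|l]]]]]]]; try destruct (Z.leb 1 n); try apply H; lra. Qed.

Lemma ss_le1 f c : (forall c', f c' <= 1) -> ss f c <= 1.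
Proof. intros H. destruct c as [l n]. unfold ss; simpl.
  pose proof (H (3%nat, n)); pose proof (H (4%nat, n)).
  destruct l as [|[|[|[|[|[|[|l]]]]]]]; try destruct (Z.leb 1 n); try apply H; lra. Qed.

Lemma hitT_nonneg m c : 0 <= hitT GP m c.
Proof.
  revert c. induction m as [|m IH]; intros c. simpl; lra.
  destruct (Nat.eq_dec (fst c) 6) as [E|E].
  - rewrite hitT_term by auto. destruct m; lra.
  - destruct m. rewrite hitT_1 by auto; lra.
    rewrite hitT_step by auto. apply ss_nonneg. auto.
Qed.

Lemma A_bounds M c : 0 <= A M c <= 1.
Proof.
  revert c. induction M as [|M IH]; intros c.
  - destruct (Nat.eq_dec (fst c) 6) as [E|E].
    + rewrite A_term by auto; lra.
    + change (A 0 c) with (hitT GP 1 c). rewrite hitT_1 by auto; lra.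
  - destruct (Nat.eq_dec (fst c) 6) as [E|E].
    + rewrite A_term by auto; lra.
    + rewrite A_rec by auto. split. apply ss_nonneg; apply IH. apply ss_le1; apply IH.
Qed.

Lemma A_grow M c : A M c <= A (S M) c.
Proof. change (A (S M) c) with (A M c + hitT GP (S (S M)) c).
  pose proof (hitT_nonneg (S (S M)) c); lra. Qed.

Lemma B_grow M c : B M c <= B (S M) c.
Proof. change (B (S M) c) with (B M c + INR (S (S M)) * hitT GP (S (S M)) c).
  pose proof (hitT_nonneg (S (S M)) c); pose proof (pos_INR (S (S M))); nra. Qed.

Definition h (n : Z) : R := 7 * IZR (Z.max n (-1)) + 9.

Lemma h_ge2 n : 2 <= h n.
Proof. unfold h. pose proof (Z.le_max_r n (-1)). apply IZR_le in H. lra. Qed.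

Lemma h_eq n : (-1 <= n)%Z -> h n = 7 * IZR n + 9.
Proof. intros. unfold h. rewrite Z.max_l by lia. reflexivity. Qed.

Definition Vb (c : config) : R :=
  let n := snd c in
  match fst c with
  | 0%nat => h 1 + 1
  | 1%nat => h n
  | 2%nat => (h (n+1) + h (n-2)) / 2 + 5/2
  | 3%nat => h (n+1) + 1
  | 4%nat => h (n-2) + 2
  | 5%nat => h (n-1) + 1
  | 6%nat => 1
  | _ => 0
  end.

Lemma Vb_nonneg c : 0 <= Vb c.
Proof. destruct c as [l n]. unfold Vb; simpl.
  pose proof (h_ge2 n); pose proof (h_ge2 (n+1)); pose proof (h_ge2 (n-2));
  pose proof (h_ge2 (n-1)); pose proof (h_ge2 1).
  destruct l as [|[|[|[|[|[|[|l]]]]]]]; lra. Qed.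

Lemma Vb_super c : fst c <> 6%nat -> ss (fun c' => Vb c' + 1) c <= Vb c.
Proof. intros E. destruct c as [l n]. unfold ss, Vb; simpl.
  destruct l as [|[|[|[|[|[|[|l]]]]]]]; simpl; try lra.
  - destruct (Z.leb 1 n) eqn:Hn.
    + apply Z.leb_le in Hn. rewrite !h_eq by lia. rewrite plus_IZR, minus_IZR. simpl. lra.
    + pose proof (h_ge2 n); lra.
  - replace (n - 1 - 1)%Z with (n - 2)%Z by lia. lra.
  - simpl in E. lia.
Qed.

Lemma B_bounds M c : 0 <= B M c <= Vb c.
Proof.
  revert c. induction M as [|M IH]; intros c.
  - destruct (Nat.eq_dec (fst c) 6) as [E|E].
    + rewrite B_term by auto. destruct c as [l n]; simpl in E; subst; unfold Vb; simpl; lra.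
    + change (B 0 c) with (INR 1 * hitT GP 1 c). rewrite hitT_1 by auto. pose proof (Vb_nonneg c). lra.
  - destruct (Nat.eq_dec (fst c) 6) as [E|E].
    + rewrite B_term by auto. destruct c as [l n]; simpl in E; subst; unfold Vb; simpl; lra.
    + rewrite B_rec by auto. split.
      * apply ss_nonneg. intros c'. pose proof (IH c'); pose proof (A_bounds M c'); lra.
      * eapply Rle_trans; [|apply Vb_super; auto]. apply ss_mono.
        intros c'. pose proof (IH c'); pose proof (A_bounds M c'); lra.
Qed.

Lemma mono_lim (u : nat -> R) (K : R) :
  (forall M, u M <= u (S M)) -> (forall M, u M <= K) -> {l | Un_cv u l}.
Proof.
  intros Hg Hb. apply growing_cv. intros n; apply Hg.
  exists K. intros x [i ->]. apply Hb.
Qed.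

Lemma cv_le (u : nat -> R) l K : Un_cv u l -> (forall M, u M <= K) -> l <= K.
Proof.
  intros H Hb. destruct (Rle_lt_dec l K) as [|Hl]; auto.
  destruct (H (l - K)) as [N HN]; [lra|].
  specialize (HN N (le_n N)). specialize (Hb N). unfold Rdist in HN.
  apply Rabs_def2 in HN. lra.
Qed.

Lemma cv_ge (u : nat -> R) l K : Un_cv u l -> (forall M, K <= u M) -> K <= l.
Proof.
  intros H Hb. destruct (Rle_lt_dec K l) as [|Hl]; auto.
  destruct (H (K - l)) as [N HN]; [lra|].
  specialize (HN N (le_n N)). specialize (Hb N). unfold Rdist in HN.
  apply Rabs_def2 in HN. lra.
Qed.

Lemma cv_const r : Un_cv (fun _ => r) r.
Proof. intros eps He. exists 0%nat. intros. unfold Rdist. rewrite Rminus_diag, Rabs_R0. auto. Qed.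

Lemma cv_ext (u v : nat -> R) l : (forall n, u n = v n) -> Un_cv u l -> Un_cv v l.
Proof. intros E H eps He. destruct (H eps He) as [N HN]. exists N. intros. rewrite <- E. auto. Qed.

Lemma cv_S (u : nat -> R) l : Un_cv u l -> Un_cv (fun n => u (S n)) l.
Proof. intros H eps He. destruct (H eps He) as [N HN]. exists N. intros. apply HN. lia. Qed.

Lemma cv_scal (u : nat -> R) a l : Un_cv u l -> Un_cv (fun n => a * u n) (a * l).
Proof. intros. apply CV_mult; auto. apply cv_const. Qed.

Lemma ss_cv (f : nat -> config -> R) g c :
  (forall c', Un_cv (fun M => f M c') (g c')) -> Un_cv (fun M => ss (f M) c) (ss g c).
Proof.
  intros H. destruct c as [l n]. unfold ss; simpl.
  destruct l as [|[|[|[|[|[|[|l]]]]]]]; try destruct (Z.leb 1 n); try apply cv_const; try apply H;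
  try (apply CV_plus; apply cv_scal; apply H).
Qed.

Definition Ainf (c : config) : R :=
  proj1_sig (mono_lim (fun M => A M c) 1 (fun M => A_grow M c) (fun M => proj2 (A_bounds M c))).
Definition Binf (c : config) : R :=
  proj1_sig (mono_lim (fun M => B M c) (Vb c) (fun M => B_grow M c) (fun M => proj2 (B_bounds M c))).

Lemma Ainf_cv c : Un_cv (fun M => A M c) (Ainf c).
Proof. unfold Ainf. destruct mono_lim; auto. Qed.
Lemma Binf_cv c : Un_cv (fun M => B M c) (Binf c).
Proof. unfold Binf. destruct mono_lim; auto. Qed.

Lemma Ainf_bounds c : 0 <= Ainf c <= 1.
Proof. split. apply (cv_ge _ _ _ (Ainf_cv c)). intros; apply A_bounds.
  apply (cv_le _ _ _ (Ainf_cv c)). intros; apply A_bounds. Qed.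

Lemma Binf_bounds c : 0 <= Binf c <= Vb c.
Proof. split. apply (cv_ge _ _ _ (Binf_cv c)). intros; apply B_bounds.
  apply (cv_le _ _ _ (Binf_cv c)). intros; apply B_bounds. Qed.

Lemma Ainf_term c : fst c = 6%nat -> Ainf c = 1.
Proof. intros E. apply (UL_sequence (fun M => A M c)). apply Ainf_cv.
  apply (cv_ext (fun _ => 1)). intros; rewrite A_term; auto. apply cv_const. Qed.

Lemma Binf_term c : fst c = 6%nat -> Binf c = 1.
Proof. intros E. apply (UL_sequence (fun M => B M c)). apply Binf_cv.
  apply (cv_ext (fun _ => 1)). intros; rewrite B_term; auto. apply cv_const. Qed.

Lemma Ainf_fix c : fst c <> 6%nat -> Ainf c = ss Ainf c.
Proof. intros E. apply (UL_sequence (fun M => A (S M) c)).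
  apply cv_S, Ainf_cv.
  apply (cv_ext (fun M => ss (A M) c)). intros; rewrite A_rec; auto.
  apply ss_cv. intros; apply Ainf_cv. Qed.

Lemma Binf_fix c : fst c <> 6%nat -> Binf c = ss (fun c' => Binf c' + Ainf c') c.
Proof. intros E. apply (UL_sequence (fun M => B (S M) c)).
  apply cv_S, Binf_cv.
  apply (cv_ext (fun M => ss (fun c' => B M c' + A M c') c)). intros; rewrite B_rec; auto.
  apply (ss_cv (fun M c' => B M c' + A M c')). intros; apply CV_plus; [apply Binf_cv|apply Ainf_cv]. Qed.

Fixpoint F (k : nat) : R :=
  match k with
  | O => 0
  | S O => 0
  | S ((S j) as k') => F k' + F j + 1
  end.

Lemma F_low k : INR k * (INR k - 3) / 8 <= F k.
Proof.
  assert (forall k, INR k * (INR k - 3) / 8 <= F k /\ INR (S k) * (INR (S k) - 3) / 8 <= F (S k)).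
  { clear k; intros k; induction k as [|k IH].
    - simpl. lra.
    - destruct IH as [H1 H2]. split; auto.
      change (F (S (S k))) with (F (S k) + F k + 1).
      rewrite !S_INR in *. pose proof (pos_INR k). nra. }
  apply H.
Qed.

Lemma harm_zero (D : nat -> R) (C K : R) :
  D 0%nat = 0 -> D 1%nat = 0 ->
  (forall j, 2 * D (S (S j)) = D (S (S (S j))) + D j) ->
  (forall k, Rabs (D k) <= C * INR k + K) ->
  forall k, D k = 0.
Proof.
  intros H0 H1 Hh Hb.
  set (t := D 2%nat).
  assert (Hf : forall k, D k = t * F k /\ D (S k) = t * F (S k) /\ D (S (S k)) = t * F (S (S k))).
  { induction k as [|k IH].
    - simpl. rewrite H0, H1. unfold t. repeat split; ring.
    - destruct IH as [Ha [Hb' Hc]]. repeat split; auto.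
      pose proof (Hh k). change (F (S (S (S k)))) with (F (S (S k)) + F (S k) + 1).
      change (F (S (S k))) with (F (S k) + F k + 1) in *. lra. }
  assert (Ht : t = 0).
  { destruct (Req_dec t 0) as [|Hne]; auto. exfalso.
    set (S0 := Rabs C + Rabs K).
    assert (Hat : 0 < Rabs t) by (apply Rabs_pos_lt; auto).
    set (r := 4 + 8 * S0 / Rabs t).
    assert (HS0 : 0 <= S0) by (unfold S0; pose proof (Rabs_pos C); pose proof (Rabs_pos K); lra).
    assert (Hr : 4 <= r) by (unfold r; assert (0 <= 8 * S0 / Rabs t) by (apply Rmult_le_pos; [lra| apply Rlt_le, Rinv_0_lt_compat; auto]); lra).
    destruct (archimed r) as [Hup _].
    set (k := Z.to_nat (up r)).
    assert (Hk : INR k = IZR (up r)).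
    { unfold k. rewrite INR_IZR_INZ, Z2Nat.id; auto. apply le_IZR. lra. }
    assert (Hkr : r <= INR k) by lra.
    assert (Hk4 : Rabs t * (INR k - 4) >= 8 * S0).
    { assert (INR k - 4 >= 8 * S0 / Rabs t) by (unfold r in Hkr; lra).
      apply Rmult_ge_compat_l with (r := Rabs t) in H; [|lra].
      unfold Rdiv in H. rewrite (Rmult_comm (8 * S0)), <- Rmult_assoc, Rinv_r in H; lra. }
    destruct (Hf k) as [Hdk _].
    pose proof (Hb k) as Hbk. rewrite Hdk, Rabs_mult in Hbk.
    pose proof (F_low k) as Hfl.
    assert (0 <= F k) by (assert (0 <= INR k * (INR k - 3)) by nra; lra).
    rewrite (Rabs_right (F k)) in Hbk by lra.
    assert (C * INR k + K <= S0 * INR k).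
    { unfold S0. pose proof (Rle_abs C). pose proof (Rle_abs K). pose proof (Rabs_pos K). assert (0 <= (Rabs C - C) * INR k) by (apply Rmult_le_pos; lra). assert (0 <= Rabs K * (INR k - 1)) by (apply Rmult_le_pos; lra). nra. }
    assert (Rabs t * (INR k * (INR k - 3) / 8) <= Rabs t * F k) by (apply Rmult_le_compat_l; lra).
    nra. }
  intros k. destruct (Hf k) as [E _]. rewrite E, Ht. ring.
Qed.

Lemma div5_sq (x : Z) : (exists m, x * x = 5 * m)%Z -> (exists a, x = 5 * a)%Z.
Proof.
  intros [m Hm]. exists (x / 5)%Z.
  pose proof (Z.div_mod x 5 ltac:(lia)) as Hd. pose proof (Z.mod_pos_bound x 5 ltac:(lia)) as Hb.
  set (a := (x / 5)%Z) in *. set (r := (x mod 5)%Z) in *.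
  assert (r = 0 \/ r = 1 \/ r = 2 \/ r = 3 \/ r = 4)%Z as Hr by lia.
  rewrite Hd in Hm.
  destruct Hr as [Hr|[Hr|[Hr|[Hr|Hr]]]]; rewrite Hr in Hm, Hd; try lia; nia.
Qed.

Lemma descent n : forall x y : Z, (Z.abs_nat y < n)%nat -> (x * x = 5 * (y * y))%Z -> y = 0%Z.
Proof.
  induction n as [|n IH]; intros x y Hn H. lia.
  destruct (div5_sq x) as [a Ha]. exists (y*y)%Z. lia.
  subst x.
  destruct (div5_sq y) as [b Hb]. exists (a*a)%Z. lia.
  subst y.
  destruct (Z.eq_dec b 0) as [->|Hb0]. lia.
  exfalso. assert (b = 0%Z). { apply (IH a b). lia. nia. } lia.
Qed.

Definition pos (k : nat) : Z := (Z.of_nat k - 1)%Z.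

Lemma Ainf_le0 n : (n <= 0)%Z -> Ainf (1%nat, n) = 1.
Proof. intros Hn. rewrite (Ainf_fix (1%nat, n)) by (simpl; lia). unfold ss; simpl.
  destruct (Z.leb_spec 1 n); [lia|]. apply Ainf_term; reflexivity. Qed.

Lemma Ainf_12 n : (1 <= n)%Z -> Ainf (1%nat, n) = Ainf (2%nat, n).
Proof. intros Hn. rewrite (Ainf_fix (1%nat, n)) by (simpl; lia). unfold ss; simpl.
  destruct (Z.leb_spec 1 n); [reflexivity|lia]. Qed.

Lemma Ainf_2 n : Ainf (2%nat, n) = 1/2 * Ainf (1%nat, (n+1)%Z) + 1/2 * Ainf (1%nat, (n-2)%Z).
Proof. rewrite (Ainf_fix (2%nat, n)) by (simpl; lia). unfold ss; simpl.
  rewrite (Ainf_fix (3%nat, n)) by (simpl; lia). rewrite (Ainf_fix (4%nat, n)) by (simpl; lia).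
  unfold ss; simpl. rewrite (Ainf_fix (5%nat, (n-1)%Z)) by (simpl; lia). unfold ss; simpl.
  replace (n - 1 - 1)%Z with (n - 2)%Z by lia. lra. Qed.

Lemma pos_SS j : pos (S (S (S j))) = (pos (S (S j)) + 1)%Z /\ pos j = (pos (S (S j)) - 2)%Z.
Proof. unfold pos. rewrite !Nat2Z.inj_succ. lia. Qed.

Lemma Ainf_one n : (-1 <= n)%Z -> Ainf (1%nat, n) = 1.
Proof.
  intros Hn.
  assert (HD : forall k, (fun k => 1 - Ainf (1%nat, pos k)) k = 0).
  { apply (harm_zero _ 0 1).
    - simpl. rewrite Ainf_le0. ring. unfold pos; simpl; lia.
    - simpl. rewrite Ainf_le0. ring. unfold pos; simpl; lia.
    - intros j. simpl. destruct (pos_SS j) as [E1 E2]. rewrite E1, E2.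
      rewrite Ainf_12 by (unfold pos; rewrite !Nat2Z.inj_succ; lia). rewrite Ainf_2. lra.
    - intros k. simpl. pose proof (Ainf_bounds (1%nat, pos k)). rewrite Rabs_right; lra. }
  specialize (HD (Z.to_nat (n+1))). simpl in HD.
  replace (pos (Z.to_nat (n + 1))) with n in HD by (unfold pos; rewrite Z2Nat.id; lia). lra.
Qed.

Lemma Binf_le0 n : (n <= 0)%Z -> Binf (1%nat, n) = 2.
Proof. intros Hn. rewrite (Binf_fix (1%nat, n)) by (simpl; lia). unfold ss; simpl; unfold valuation.
  destruct (Z.leb_spec 1 n); [lia|]. rewrite Ainf_term, Binf_term by reflexivity. ring. Qed.

Lemma Binf_loop n : (1 <= n)%Z ->
  Binf (1%nat, n) = 1/2 * Binf (1%nat, (n+1)%Z) + 1/2 * Binf (1%nat, (n-2)%Z) + 7/2.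
Proof. intros Hn. rewrite (Binf_fix (1%nat, n)) by (simpl; lia). unfold ss; simpl; unfold valuation.
  destruct (Z.leb_spec 1 n); [|lia].
  rewrite <- Ainf_12, Ainf_one by lia.
    rewrite (Binf_fix (2%nat, n)) by (simpl; lia). unfold ss; simpl; unfold valuation.
  rewrite (Binf_fix (3%nat, n)) by (simpl; lia). rewrite (Binf_fix (4%nat, n)) by (simpl; lia).
  rewrite (Ainf_fix (3%nat, n)) by (simpl; lia). rewrite (Ainf_fix (4%nat, n)) by (simpl; lia).
  unfold ss; simpl; unfold valuation.
  rewrite (Binf_fix (5%nat, (n-1)%Z)) by (simpl; lia). rewrite (Ainf_fix (5%nat, (n-1)%Z)) by (simpl; lia).
  unfold ss; simpl; unfold valuation. replace (n - 1 - 1)%Z with (n - 2)%Z by lia.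
  rewrite !Ainf_one by lia. lra. Qed.

Lemma abs_le_inv x a : Rabs x <= a -> -a <= x <= a.
Proof. intros H. pose proof (Rle_abs x). pose proof (Rle_abs (-x)). rewrite Rabs_Ropp in H1. lra. Qed.

Definition s5 := sqrt 5.
Lemma s5_sq : s5 * s5 = 5.
Proof. unfold s5. apply sqrt_sqrt. lra. Qed.
Lemma s5_bounds : 2 < s5 < 3.
Proof. pose proof s5_sq. assert (0 <= s5) by (apply sqrt_pos). nra. Qed.

Definition psi := (1 - s5) / 2.
Definition G (k : nat) : R := (3 - s5) / 2 * (1 + (1 + s5) / 2 * psi ^ k).



Lemma psi_eq : psi ^ 3 - (2 * psi ^ 2 - 1) = 0.
Proof. unfold psi. pose proof s5_sq.
  replace (((1 - s5) / 2) ^ 3 - (2 * ((1 - s5) / 2) ^ 2 - 1)) with ((5 - s5 * s5) * (1 + s5) / 8)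
    by (simpl; field). rewrite H. field. Qed.

Lemma G_harm j : 2 * G (S (S j)) = G (S (S (S j))) + G j.
Proof. unfold G. pose proof psi_eq.
  replace (psi ^ S (S (S j))) with (psi ^ j * psi ^ 3) by (rewrite <- pow_add; f_equal; lia).
  replace (psi ^ S (S j)) with (psi ^ j * psi ^ 2) by (rewrite <- pow_add; f_equal; lia).
  replace (psi ^ 3) with (2 * psi ^ 2 - 1) by lra. ring. Qed.

Lemma G_bound k : Rabs (G k) <= 2.
Proof. unfold G. pose proof s5_bounds.
  assert (Rabs (psi ^ k) <= 1).
  { rewrite <- RPow_abs. rewrite <- (pow1 k). apply pow_incr. split. apply Rabs_pos.
    unfold psi. apply Rabs_le. lra. }
  apply abs_le_inv in H0 as [H1 H2]. rewrite Rabs_mult.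
  rewrite (Rabs_right ((3 - s5)/2)) by lra.
  assert (Rabs (1 + (1 + s5) / 2 * psi ^ k) <= 3).
  { apply Rabs_le. split; nra. }
  assert (0 <= Rabs (1 + (1 + s5) / 2 * psi ^ k)) by apply Rabs_pos. nra. Qed.

Lemma Binf_11 : Binf (1%nat, 1%Z) = 9 + 7 * (s5 - 1) / 2.
Proof.
  pose proof s5_sq as Hs.
  assert (Hs3 : s5 * s5 * s5 = 5 * s5) by (rewrite Hs; ring).
  assert (Hs4 : s5 * s5 * s5 * s5 = 25) by (replace (s5 * s5 * s5 * s5) with ((s5 * s5) * (s5 * s5)) by ring; rewrite Hs; ring).
  set (D := fun k => Binf (1%nat, pos k) - 7 * (INR k - 1) - 2 - 7 * G k).
  assert (HD : forall k, D k = 0).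
  { apply (harm_zero D 14 30).
    - unfold D. simpl. rewrite Binf_le0 by (unfold pos; simpl; lia). unfold G. simpl.
      field_simplify. rewrite ?Rmult_1_r. nra.
    - unfold D. simpl. rewrite Binf_le0 by (unfold pos; simpl; lia). unfold G, psi. simpl. nra.
    - intros j. unfold D. destruct (pos_SS j) as [E1 E2]. rewrite E1, E2.
      rewrite (Binf_loop (pos (S (S j)))) by (unfold pos; rewrite !Nat2Z.inj_succ; lia).
      pose proof (G_harm j). rewrite !S_INR. lra.
    - intros k. unfold D. pose proof (Binf_bounds (1%nat, pos k)) as [Hb1 Hb2].
      unfold Vb in Hb2; simpl in Hb2. rewrite h_eq in Hb2 by (unfold pos; lia).
      unfold pos in Hb2. rewrite minus_IZR, <- INR_IZR_INZ in Hb2.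
      pose proof (G_bound k). apply abs_le_inv in H as [H1 H2]. pose proof (pos_INR k).
      unfold pos in Hb1 |- *. apply Rabs_le. lra. }
  specialize (HD 2%nat). unfold D in HD. replace (pos 2) with 1%Z in HD by reflexivity.
  unfold G, psi in HD. simpl in HD. nra.
Qed.

Theorem mainTheorem13 (n0 : Z) :
  terminates_as GP (locs_init GP, n0) /\
  exists ET : R, expected_time_is GP (locs_init GP, n0) ET /\ irrational ET.
Proof.
  assert (HA0 : Ainf (0%nat, n0) = 1).
  { rewrite (Ainf_fix (0%nat, n0)) by (simpl; lia). unfold ss; simpl; unfold valuation.
    apply Ainf_one; lia. }
  assert (HB0 : Binf (0%nat, n0) = 10 + 7 * (s5 - 1) / 2).
  { rewrite (Binf_fix (0%nat, n0)) by (simpl; lia). unfold ss; simpl; unfold valuation.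
    rewrite Ainf_one by lia. rewrite Binf_11. ring. }
  split.
  - unfold terminates_as, infinite_sum. simpl locs_init. rewrite <- HA0.
    exact (Ainf_cv (0%nat, n0)).
  - exists (Binf (0%nat, n0)). split.
    + unfold expected_time_is, infinite_sum. simpl locs_init. exact (Binf_cv (0%nat, n0)).
    + rewrite HB0. intros p q Hq Heq.
      pose proof s5_sq as Hs.
      assert (Hq' : IZR q <> 0) by (apply not_0_IZR; auto).
      assert (Hp : IZR p = (13 + 7 * s5) / 2 * IZR q).
      { replace (IZR p) with (IZR p / IZR q * IZR q) by (field; auto). rewrite <- Heq. field. }
      assert (HX : IZR (2 * p - 13 * q) = s5 * IZR (7 * q)).
      { rewrite minus_IZR, !mult_IZR, Hp. field. }
      assert (HZ : ((2 * p - 13 * q) * (2 * p - 13 * q) = 5 * ((7 * q) * (7 * q)))%Z).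
      { apply eq_IZR. rewrite !mult_IZR. rewrite HX.
        replace (s5 * IZR (7 * q) * (s5 * IZR (7 * q))) with ((s5 * s5) * (IZR (7 * q) * IZR (7 * q))) by ring.
        rewrite Hs, !mult_IZR. ring. }
      pose proof (descent (S (Z.abs_nat (7 * q))) _ _ (Nat.lt_succ_diag_r _) HZ). lia.
Qed.
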